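(* Let $\mathcal{A},\mathcal{B}\subseteq\mathcal{S}$ be finite sets of permutations and let $$A=\{\vec v\in[0,1]^{\mathcal A}\mid\exists(\sigma^m)\in\mathcal{S}^{\mathbb N}:|\sigma^m|\to\infty,\ (\widetilde{\mathrm{c\text{-}occ}}(\pi,\sigma^m))_{\pi\in\mathcal A}\to\vec v\},$$ $$B=\{\vec v\in[0,1]^{\mathcal B}\mid\exists(\sigma^m)\in\mathcal{S}^{\mathbb N}:|\sigma^m|\to\infty,\ (\widetilde{\mathrm{occ}}(\pi,\sigma^m))_{\pi\in\mathcal B}\to\vec v\},$$ $$C=\{\vec v\in[0,1]^{\mathcal A\sqcup\mathcal B}\mid\exists(\sigma^m)\in\mathcal{S}^{\mathbb N}:|\sigma^m|\to\infty,\ (\widetilde{\mathrm{c\text{-}occ}}(\pi,\sigma^m))_{\pi\in\mathcal A}\to\vec v_{\mathcal A},\ (\widetilde{\mathrm{occ}}(\pi,\sigma^m))_{\pi\in\mathcal B}\to\vec v_{\mathcal B}\}.$$ Then $A\times B=C$. More precisely, if $\vec v_A\in A$, $\vec v_B\in B$ and $(\sigma^m_A)_m$, $(\sigma^m_B)_m$ are sequences of permutations with $|\sigma^m_A|\to\infty$, $(\widetilde{\mathrm{c\text{-}occ}}(\pi,\sigma^m_A))_{\pi\in\mathcal A}\to\vec v_A$, $|\sigma^m_B|\to\infty$, $(\widetilde{\mathrm{occ}}(\pi,\sigma^m_B))_{\pi\in\mathcal B}\to\vec v_B$, then the sequence $\sigma^m_C:=\sigma^m_B[\sigma^m_A,\dots,\sigma^m_A]$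 satisfies $|\sigma^m_C|\to\infty$, $(\widetilde{\mathrm{c\text{-}occ}}(\pi,\sigma^m_C))_{\pi\in\mathcal A}\to\vec v_A$ and $(\widetilde{\mathrm{occ}}(\pi,\sigma^m_C))_{\pi\in\mathcal B}\to\vec v_B$.
   Context: $\mathcal{S}_n$ is the set of permutations of $[n]$, $\mathcal{S}$ the set of all finite permutations. For $\sigma\in\mathcal{S}_n$ and $I\subseteq[n]$, $\mathrm{pat}_I(\sigma)$ is the unique permutation of $[|I|]$ order-isomorphic to $(\sigma(i))_{i\in I}$. For $\pi\in\mathcal{S}_k$ and $\sigma\in\mathcal{S}_n$ ($n\ge k$): $\mathrm{occ}(\pi,\sigma)$ is the number of subsets $I\subseteq[n]$ with $\mathrm{pat}_I(\sigma)=\pi$ and $\widetilde{\mathrm{occ}}(\pi,\sigma)=\mathrm{occ}(\pi,\sigma)/\binom nk$; $\mathrm{c\text{-}occ}(\pi,\sigma)$ is the number of intervals $I\subseteq[n]$ with $\mathrm{pat}_I(\sigma)=\pi$ and $\widetilde{\mathrm{c\text{-}occ}}(\pi,\sigma)=\mathrm{c\text{-}occ}(\pi,\sigma)/n$ (these are taken to be $0$ when $n<k$). For $\theta\in\mathcal{S}_d$ and permutations $\nu^{(1)},\dots,\nu^{(d)}$, the substitution $\theta[\nu^{(1)},\dots,\nu^{(d)}]$ is the permutation of size $\sum_i|\nu^{(i)}|$ obtained by replacing, in the diagram of $\theta$ (points $(i,\theta(i))$), each point $(i,\theta(i))$ by the diagram of $\nu^{(i)}$ and rescaling rows and columns; i.e.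 its entries split into consecutive blocks of sizes $|\nu^{(1)}|,\dots,|\nu^{(d)}|$, the $i$-th block is order-isomorphic to $\nu^{(i)}$, and every entry of block $i$ is smaller than every entry of block $j$ iff $\theta(i)<\theta(j)$. *)

(* Defs.v *)
From Stdlib Require Import Reals.
From mathcomp Require Import all_boot.

Set Implicit Arguments.
Unset Strict Implicit.
Unset Printing Implicit Defensive.

(* A permutation of [n] is represented 0-based as the sequence of its values
   (sigma(1)-1, ..., sigma(n)-1): a sequence that is a rearrangement of
   0, ..., n-1.  Its size |sigma| is [size s]. *)
Definition is_perm (s : seq nat) : bool := perm_eq s (iota 0 (size s)).

Definition order_iso (s t : seq nat) : bool :=
  (size s == size t) &&
  all (fun a => all (fun b =>
         (nth 0 s a < nth 0 s b) == (nth 0 t a < nth 0 t b))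
       (iota 0 (size s))) (iota 0 (size s)).

Definition occ (pi sigma : seq nat) : nat :=
  #|[set I : {set 'I_(size sigma)} |
       order_iso (mask [seq i \in I | i <- enum 'I_(size sigma)] sigma) pi]|.

Definition cocc (pi sigma : seq nat) : nat :=
  if size sigma < size pi then 0
  else count (fun i => order_iso (take (size pi) (drop i sigma)) pi)
             (iota 0 (size sigma - size pi).+1).

Definition occ_t (pi sigma : seq nat) : R :=
  if size sigma < size pi then R0
  else Rdiv (INR (occ pi sigma)) (INR 'C(size sigma, size pi)).

Definition cocc_t (pi sigma : seq nat) : R :=
  if size sigma < size pi then R0
  else Rdiv (INR (cocc pi sigma)) (INR (size sigma)).

(* Substitution theta[nu_1, ..., nu_d]: block i (0-based) is nu_i shifted by
   the total size of the blocks j with theta(j) < theta(i). *)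
Definition subst_offset (theta : seq nat) (nus : seq (seq nat)) (i : nat) : nat :=
  sumn [seq size (nth [::] nus j) | j <- iota 0 (size theta)
          & nth 0 theta j < nth 0 theta i].

Definition subst (theta : seq nat) (nus : seq (seq nat)) : seq nat :=
  flatten [seq [seq subst_offset theta nus i + x | x <- nth [::] nus i]
          | i <- iota 0 (size theta)].

Definition subst_const (theta nu : seq nat) : seq nat :=
  subst theta (nseq (size theta) nu).

Definition size_to_infty (sigma : nat -> seq nat) : Prop :=
  forall M : nat, exists N : nat, forall m : nat, (N <= m)%coq_nat -> M <= size (sigma m).

Definition perm_seq (sigma : nat -> seq nat) : Prop := forall m, is_perm (sigma m).

(* A vector of [0,1]^P is represented by a function v : seq nat -> R,
   only its values on the elements of P being relevant. *)
Definition in_unit_cube (P : seq (seq nat)) (v : seq nat -> R) : Prop :=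
  forall pi, pi \in P -> Rle R0 (v pi) /\ Rle (v pi) R1.

Definition cocc_cv (P : seq (seq nat)) (sigma : nat -> seq nat) (v : seq nat -> R) : Prop :=
  forall pi, pi \in P -> Un_cv (fun m => cocc_t pi (sigma m)) (v pi).

Definition occ_cv (P : seq (seq nat)) (sigma : nat -> seq nat) (v : seq nat -> R) : Prop :=
  forall pi, pi \in P -> Un_cv (fun m => occ_t pi (sigma m)) (v pi).

Definition limsetA (PA : seq (seq nat)) (v : seq nat -> R) : Prop :=
  in_unit_cube PA v /\
  exists sigma, perm_seq sigma /\ size_to_infty sigma /\ cocc_cv PA sigma v.

Definition limsetB (PB : seq (seq nat)) (v : seq nat -> R) : Prop :=
  in_unit_cube PB v /\
  exists sigma, perm_seq sigma /\ size_to_infty sigma /\ occ_cv PB sigma v.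

(* An element of [0,1]^(A ⊔ B) is the pair (v_A, v_B). *)
Definition limsetC (PA PB : seq (seq nat)) (vA vB : seq nat -> R) : Prop :=
  in_unit_cube PA vA /\ in_unit_cube PB vB /\
  exists sigma, perm_seq sigma /\ size_to_infty sigma /\
    cocc_cv PA sigma vA /\ occ_cv PB sigma vB.

(* Main.v *)
Require Import Defs.
From Stdlib Require Import Reals.
From mathcomp Require Import all_boot.
From Stdlib Require Import Lra.
From mathcomp Require Import zify.

Lemma size_flatten_blocks (f : nat -> seq nat) a b :
  (forall i, i < b -> size (f i) = a) ->
  size (flatten [seq f i | i <- iota 0 b]) = b * a.
Proof.
elim: b => [|b IH] H //.
rewrite -addn1 iotaD map_cat flatten_cat size_cat IH; last by move=> i Hi; apply: H; lia.
by rewrite /= cats0 H ?add0n //; lia.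
Qed.

Lemma nth_flatten_blocks (f : nat -> seq nat) a b i r :
  (forall i, i < b -> size (f i) = a) -> i < b -> r < a ->
  nth 0 (flatten [seq f i | i <- iota 0 b]) (i * a + r) = nth 0 (f i) r.
Proof.
elim: b => [|b IH] H Hi Hr //.
rewrite -addn1 iotaD map_cat flatten_cat nth_cat (@size_flatten_blocks _ a);
  last by move=> j Hj; apply: H; lia.
case: (ltnP i b) => Hib.
  have -> : i * a + r < b * a by nia.
  by apply: IH => // j Hj; apply: H; lia.
have Eib : i = b by lia.
subst i. rewrite ifF; last by lia.
by rewrite /= cats0 add0n addKn.
Qed.

Lemma map_cst (T : Type) (c : nat) (s : seq T) : [seq c | _ <- s] = nseq (size s) c.
Proof. by elim: s => //= x s ->. Qed.

Section Sub.
Variables (A B : seq nat).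
Let a := size A.
Let b := size B.

Definition offC i := subst_offset B (nseq b A) i.

Lemma subst_blocks : subst_const B A =
  flatten [seq [seq offC i + x | x <- A] | i <- iota 0 b].
Proof.
rewrite /subst_const /subst. congr flatten. apply/eq_in_map => i.
rewrite mem_iota add0n => /= Hi. by rewrite nth_nseq Hi.
Qed.

Lemma size_subst : size (subst_const B A) = b * a.
Proof. by rewrite subst_blocks; apply: size_flatten_blocks => i _; rewrite size_map. Qed.

Lemma nth_subst i r : i < b -> r < a ->
  nth 0 (subst_const B A) (i * a + r) = offC i + nth 0 A r.
Proof.
move=> Hi Hr. rewrite subst_blocks (@nth_flatten_blocks _ a) //.
  by rewrite (nth_map 0).
by move=> j _; rewrite size_map.
Qed.

Lemma offCE i : offC i = a * count (fun j => nth 0 B j < nth 0 B i) (iota 0 b).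
Proof.
rewrite /offC /subst_offset.
rewrite (_ : [seq size (nth [::] (nseq b A) j) | j <- _] = [seq a | j <- [seq j <- iota 0 b | nth 0 B j < nth 0 B i]]); last first.
  apply/eq_in_map => j; rewrite mem_filter mem_iota add0n => /andP[_ Hj].
  by rewrite nth_nseq; move: Hj => /= ->.
by rewrite map_cst sumn_nseq size_filter mulnC.
Qed.

Lemma offC_lt i j : i < b -> nth 0 B i < nth 0 B j -> offC i + a <= offC j.
Proof.
move=> Hi Hij. rewrite !offCE -mulnSr leq_mul2l; apply/orP; right.
have H1 : count (predU (fun k => nth 0 B k < nth 0 B i) (pred1 i)) (iota 0 b)
          <= count (fun k => nth 0 B k < nth 0 B j) (iota 0 b).
  apply: sub_count => k /= /orP[H|/eqP->]; [exact: ltn_trans H Hij|exact: Hij].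
apply: leq_trans H1. rewrite -(leq_add2r (count (predI (fun k => nth 0 B k < nth 0 B i) (pred1 i)) (iota 0 b))).
rewrite count_predUI.
have -> : count (predI (fun k => nth 0 B k < nth 0 B i) (pred1 i)) (iota 0 b) = 0.
  apply/eqP; rewrite eqn0Ngt -has_count; apply/hasPn => k _ /=; apply/negP => /andP[H /eqP E].
  by move: H; rewrite E ltnn.
rewrite addn0 -addn1 leq_add2l.
have : i \in iota 0 b by rewrite mem_iota.
by rewrite -has_pred1 has_count.
Qed.

End Sub.

Lemma is_permP s : uniq s -> (forall x, x \in s -> x < size s) -> is_perm s.
Proof.
move=> Hu Hx. rewrite /is_perm. apply: uniq_perm => //; first exact: iota_uniq.
have Hsub : {subset s <= iota 0 (size s)} by move=> x /Hx; rewrite mem_iota.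
have Hsz : size (iota 0 (size s)) <= size s by rewrite size_iota.
exact: (uniq_min_size Hu Hsub Hsz).2.
Qed.

Lemma perm_uniq' s : is_perm s -> uniq s.
Proof. by move=> H; rewrite (perm_uniq H) iota_uniq. Qed.

Lemma perm_lt s x : is_perm s -> x \in s -> x < size s.
Proof. by move=> H; rewrite (perm_mem H) mem_iota. Qed.

Lemma perm_nth_lt s r : is_perm s -> r < size s -> nth 0 s r < size s.
Proof. by move=> H Hr; apply: perm_lt => //; apply: mem_nth. Qed.

Arguments perm_nth_lt {s r}.
Arguments perm_lt {s x}.

Lemma count_lt_iota v b : v <= b -> count (fun x => x < v) (iota 0 b) = v.
Proof.
move=> H. rewrite -(subnKC H) iotaD count_cat.
rewrite (eq_in_count (a2 := predT)) ?count_predT ?size_iota; last first.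
  by move=> x; rewrite mem_iota.
rewrite (eq_in_count (a2 := pred0)) ?count_pred0 ?addn0 //.
by move=> x; rewrite mem_iota add0n /=; lia.
Qed.

Lemma offC_perm A B i : is_perm B -> i < size B -> offC A B i = size A * nth 0 B i.
Proof.
move=> HB Hi. rewrite offCE; congr (_ * _).
have -> : count (fun j => nth 0 B j < nth 0 B i) (iota 0 (size B))
   = count (fun x => x < nth 0 B i) [seq nth 0 B j | j <- iota 0 (size B)].
  by rewrite count_map.
have -> : [seq nth 0 B j | j <- iota 0 (size B)] = B by exact: (mkseq_nth 0 B).
rewrite (permP HB). apply: count_lt_iota. have := perm_nth_lt HB Hi. lia.
Qed.

Lemma subst_perm A B : is_perm A -> is_perm B -> is_perm (subst_const B A).
Proof.
move=> HA HB. set C := subst_const B A.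
have Hs : size C = size B * size A by exact: size_subst.
case: (posnP (size A)) => Ha.
  have : size C = 0 by rewrite Hs Ha muln0.
  by move/size0nil => ->.
have HC : forall t, t < size C -> nth 0 C t = nth 0 B (t %/ size A) * size A + nth 0 A (t %% size A).
  move=> t Ht. rewrite {1}(divn_eq t (size A)) nth_subst.
  - rewrite offC_perm ?(mulnC (size A)) //; by rewrite ltn_divLR //; rewrite -Hs.
  - by rewrite ltn_divLR //; rewrite -Hs.
  - by rewrite ltn_pmod.
have HCE : C = [seq nth 0 C t | t <- iota 0 (size C)] by rewrite -/(mkseq (nth 0 C) (size C)) mkseq_nth.
apply: is_permP.
- rewrite HCE map_inj_in_uniq ?iota_uniq // => t t'; rewrite !mem_iota !add0n => /= Ht Ht'.
  rewrite !HC // => E.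
  have Hi : t %/ size A < size B by rewrite ltn_divLR // -Hs.
  have Hi' : t' %/ size A < size B by rewrite ltn_divLR // -Hs.
  have Hr := ltn_pmod t Ha. have Hr' := ltn_pmod t' Ha.
  have Ar := perm_nth_lt HA Hr. have Ar' := perm_nth_lt HA Hr'.
  have E1 : nth 0 B (t %/ size A) = nth 0 B (t' %/ size A).
    by move: (congr1 (fun z => z %/ size A) E); rewrite /= !divnMDl // (divn_small Ar) (divn_small Ar') !addn0.
  have E2 : nth 0 A (t %% size A) = nth 0 A (t' %% size A).
    by move: (congr1 (fun z => z %% size A) E); rewrite /= !modnMDl (modn_small Ar) (modn_small Ar').
  move/eqP: E1; rewrite nth_uniq ?perm_uniq' // => /eqP E1.
  move/eqP: E2; rewrite nth_uniq ?perm_uniq' // => /eqP E2.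
  by rewrite (divn_eq t (size A)) (divn_eq t' (size A)) E1 E2.
- move=> x; rewrite HCE => /mapP[t]; rewrite mem_iota add0n /= => Ht ->.
  rewrite HC // size_map size_iota Hs.
  have Hi : t %/ size A < size B by rewrite ltn_divLR // -Hs.
  have Bi := perm_nth_lt HB Hi.
  have Ar := perm_nth_lt HA (ltn_pmod t Ha).
  nia.
Qed.

Lemma order_iso_size s pi : order_iso s pi -> size s = size pi.
Proof. by case/andP => /eqP. Qed.

Lemma order_iso_equiv s s' pi : size s = size s' ->
  (forall p q, p < size s -> q < size s -> (nth 0 s p < nth 0 s q) = (nth 0 s' p < nth 0 s' q)) ->
  order_iso s pi = order_iso s' pi.
Proof.
move=> Hs H. rewrite /order_iso Hs; congr andb.
apply: eq_in_all => p; rewrite mem_iota add0n /= => Hp.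
apply: eq_in_all => q; rewrite mem_iota add0n /= => Hq.
by rewrite H // Hs.
Qed.

Lemma take_drop_short (s : seq nat) t k : 0 < k -> size s < t + k -> size (take k (drop t s)) < k.
Proof. move=> Hk H; rewrite size_take size_drop; case: ifP => H2; lia. Qed.

Lemma cocc_alt pi s : 0 < size pi ->
  cocc pi s = count (fun t => order_iso (take (size pi) (drop t s)) pi) (iota 0 (size s)).
Proof.
move=> Hk. rewrite /cocc. set Q := fun t => _.
have HQ : forall t, size s < t + size pi -> Q t = false.
  move=> t Ht; apply/negP => /order_iso_size E.
  by have := take_drop_short _ _ _ Hk Ht; rewrite E ltnn.
case: ifP => Hn.
  apply/esym/eqP; rewrite eqn0Ngt -has_count; apply/hasPn => t _; rewrite HQ //; lia.
have E : size s = (size s - size pi).+1 + (size pi - 1) by lia.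
rewrite [in RHS]E iotaD count_cat.
have -> : count Q (iota (0 + (size s - size pi).+1) (size pi - 1)) = 0.
  apply/eqP; rewrite eqn0Ngt -has_count; apply/hasPn => t; rewrite mem_iota => /andP[H1 H2].
  rewrite HQ //; lia.
by rewrite addn0.
Qed.

Lemma sub_in_count (T : eqType) (a1 a2 : pred T) (s : seq T) :
  (forall x, x \in s -> a1 x -> a2 x) -> count a1 s <= count a2 s.
Proof.
elim: s => //= x s IH H.
rewrite leq_add ?IH //; last by move=> y Hy; apply: H; rewrite inE Hy orbT.
case E: (a1 x) => //=; by rewrite (H x) // inE eqxx.
Qed.

Lemma count_tail n k : count (fun r => n < r + k) (iota 0 n) <= k.
Proof.
have E : iota 0 n = iota 0 (n - k) ++ iota (0 + (n - k)) (n - (n - k)).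
  by rewrite -iotaD subnKC // leq_subr.
rewrite E count_cat.
have -> : count (fun r => n < r + k) (iota 0 (n - k)) = 0.
  apply/eqP; rewrite eqn0Ngt -has_count; apply/hasPn => r; rewrite mem_iota => /andP[_ H].
  apply/negP; lia.
rewrite add0n; apply: leq_trans (count_size _ _) _; rewrite size_iota; lia.
Qed.

Section Cocc.
Variables (A B pi : seq nat).
Hypothesis HB : uniq B.
Hypothesis Hk0 : 0 < size pi.
Let a := size A.
Let b := size B.
Let k := size pi.
Let C := subst_const B A.
Let QA := fun r => order_iso (take k (drop r A)) pi.
Let QC := fun t => order_iso (take k (drop t C)) pi.

Lemma QC_block i r : i < b -> r + k <= a -> QC (i * a + r) = QA r.
Proof.
move=> Hi Hr. rewrite /QC /QA. apply: order_iso_equiv.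
  rewrite !size_take !size_drop size_subst -/a -/b.
  have Hba : i * a + a <= b * a by rewrite -mulSnr leq_mul2r Hi orbT.
  case: ifP => H1; case: ifP => H2; lia.
move=> p q; rewrite size_take size_drop -/a.
have Hk : k <= a - r by lia.
move=> Hp Hq.
have Hp' : p < k by move: Hp; case: ifP; lia.
have Hq' : q < k by move: Hq; case: ifP; lia.
rewrite !nth_take // !nth_drop -!addnA !nth_subst -/a -/b //; try lia.
Qed.

Lemma QA_short r : a < r + k -> QA r = false.
Proof.
move=> H; apply/negP => /order_iso_size E.
by have := take_drop_short _ _ _ Hk0 H; rewrite E ltnn.
Qed.

Lemma count_block i : i < b ->
  count QA (iota 0 a) <= count QC (iota (i * a) a) <= count QA (iota 0 a) + k.
Proof.
move=> Hi. rewrite -[i * a]addn0 iotaDl count_map.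
apply/andP; split.
  apply: sub_in_count => r; rewrite mem_iota add0n /= => Hr HQ.
  case: (leqP (r + k) a) => H; first by rewrite ?addn0 QC_block.
  by rewrite QA_short in HQ.
apply: (@leq_trans (count (predU QA (fun r => a < r + k)) (iota 0 a))).
  apply: sub_in_count => r; rewrite mem_iota add0n /= => Hr HQ.
  case: (leqP (r + k) a) => H; last by rewrite orbT.
  by move: HQ; rewrite ?addn0 QC_block // => ->.
rewrite -(leq_add2r (count (predI QA (fun r => a < r + k)) (iota 0 a))) count_predUI.
rewrite -addnA leq_add2l.
apply: leq_trans (leq_addr (count (predI QA (fun r => a < r + k)) (iota 0 a)) k).
exact: count_tail.
Qed.

Lemma count_blocks j : j <= b ->
  j * count QA (iota 0 a) <= count QC (iota 0 (j * a)) <= j * (count QA (iota 0 a) + k).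
Proof.
elim: j => [|j IH] Hj; first by rewrite !mul0n.
have /andP[H1 H2] := IH (ltnW Hj).
have /andP[H3 H4] := count_block _ Hj.
rewrite (mulSnr j a) iotaD count_cat add0n !mulSnr. apply/andP; split; lia.
Qed.

Lemma cocc_subst :
  b * cocc pi A <= cocc pi C <= b * (cocc pi A + k).
Proof.
have Hk := Hk0. rewrite !cocc_alt // size_subst -/a -/b -/k.
exact: count_blocks.
Qed.

End Cocc.

Lemma cocc_nil s : cocc [::] s = (size s).+1.
Proof.
rewrite /cocc.
have -> : size (@nil nat) = 0 by [].
rewrite ltn0 subn0 (eq_count (a2 := predT)) ?count_predT ?size_iota //.
by move=> t; rewrite /order_iso /= take0.
Qed.

Definition occn n (pi s : seq nat) : nat :=
  #|[set I : {set 'I_n} | order_iso (mask [seq i \in I | i <- enum 'I_n] s) pi]|.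

Lemma occE pi s n : size s = n -> occ pi s = occn n pi s.
Proof. by move=> <-. Qed.

Lemma enum_setE n (I : {set 'I_n}) : enum I = [seq i <- enum 'I_n | i \in I].
Proof. by rewrite enumT. Qed.

Lemma mask_ofE n (I : {set 'I_n}) (s : seq nat) : size s = n ->
  mask [seq i \in I | i <- enum 'I_n] s = [seq nth 0 s (val i) | i <- enum I].
Proof.
move=> Hs.
have E : s = [seq nth 0 s (val i) | i <- enum 'I_n].
  by rewrite (map_comp (nth 0 s) val) val_enum_ord -Hs -/(mkseq _ _) mkseq_nth.
rewrite [in LHS]E -map_mask -filter_mask enum_setE //.
Qed.

Lemma size_mask_of n (I : {set 'I_n}) (s : seq nat) : size s = n ->
  size (mask [seq i \in I | i <- enum 'I_n] s) = #|I|.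
Proof. by move=> Hs; rewrite mask_ofE // size_map cardE. Qed.

Lemma sorted_enum_set n (I : {set 'I_n}) : sorted (fun x y : 'I_n => val x < val y) (enum I).
Proof.
rewrite enum_setE; apply: sorted_filter; first by move=> x y z; apply: ltn_trans.
have := iota_ltn_sorted 0 n. by rewrite -val_enum_ord sorted_map.
Qed.

Lemma order_iso_map (T : eqType) (e : seq T) (F G : T -> nat) pi :
  (forall x y, x \in e -> y \in e -> (F x < F y) = (G x < G y)) ->
  order_iso (map F e) pi = order_iso (map G e) pi.
Proof.
move=> H; apply: order_iso_equiv; first by rewrite !size_map.
case: e H => [|x0 e] H p q //; rewrite size_map => Hp Hq.
by rewrite !(nth_map x0) //; apply: H; apply: mem_nth.
Qed.

Lemma occ_le pi s : occ pi s <= 'C(size s, size pi).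
Proof.
rewrite /occ -[X in 'C(X, _)](card_ord (size s)) -card_draws.
apply: subset_leq_card; apply/subsetP => I; rewrite !inE => /order_iso_size.
by rewrite size_mask_of // => ->.
Qed.

Section Occ.
Variables (A B : seq nat).
Let a := size A.
Let b := size B.
Hypothesis Ha : 0 < a.
Hypothesis HAlt : forall r, r < a -> nth 0 A r < a.
Hypothesis HB : uniq B.

Definition supp (g : {ffun 'I_b -> option 'I_a}) : {set 'I_b} := [set j | g j != None].
Definition rr (g : {ffun 'I_b -> option 'I_a}) (j : 'I_b) : nat :=
  if g j is Some r then val r else 0.

Lemma rr_lt g j : rr g j < a.
Proof. by rewrite /rr; case: (g j) => // r; exact: ltn_ord. Qed.

Lemma pos_lt g (j : 'I_b) : j * a + rr g j < b * a.
Proof.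
have H1 := rr_lt g j. have H2 : j < b := ltn_ord j.
have : j * a + a <= b * a by rewrite -mulSnr leq_mul2r H2 orbT.
lia.
Qed.

Definition pos g j : 'I_(b * a) := Ordinal (pos_lt g j).

Lemma pos_div g j : val (pos g j) %/ a = j.
Proof. by rewrite /= divnMDl // divn_small ?addn0 // rr_lt. Qed.

Lemma pos_mod g j : val (pos g j) %% a = rr g j.
Proof. by rewrite /= modnMDl modn_small // rr_lt. Qed.

Lemma pos_inj g : injective (pos g).
Proof. move=> j j' E; apply: val_inj => /=; by rewrite -(pos_div g j) E pos_div. Qed.

Lemma pos_mono g (j j' : 'I_b) : val j < val j' -> val (pos g j) < val (pos g j').
Proof.
move=> H /=. have H1 := rr_lt g j.
have : j * a + a <= j' * a by rewrite -mulSnr leq_mul2r H orbT.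
lia.
Qed.

Definition enc g : {set 'I_(b * a)} := [set pos g j | j in supp g].

Lemma card_enc g : #|enc g| = #|supp g|.
Proof. exact: card_imset (@pos_inj g). Qed.

Lemma enc_sub g g' j : enc g \subset enc g' -> g j != None -> g' j = g j.
Proof.
move=> /subsetP Hs Hj.
have : pos g j \in enc g by apply: imset_f; rewrite inE.
move/Hs/imsetP => [j' Hj' E].
have Ej : j' = j by apply: val_inj => /=; rewrite -(pos_div g' j') -E pos_div.
subst j'.
have Er : rr g' j = rr g j by rewrite -(pos_mod g' j) -E pos_mod.
move: Hj' Hj Er; rewrite inE /rr.
case: (g' j) => // r'; case: (g j) => // r _ _ E'.
by congr Some; apply: val_inj.
Qed.

Lemma enc_inj : injective enc.
Proof.
move=> g g' E; apply/ffunP => j.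
case Hg : (g j) => [r|].
  by rewrite (enc_sub g g' j) ?E ?Hg.
case Hg' : (g' j) => [r'|] //.
have := enc_sub g' g j; rewrite E subxx Hg' => /(_ isT isT).
by rewrite Hg.
Qed.

Lemma enum_enc g : enum (enc g) = map (pos g) (enum (supp g)).
Proof.
apply: (@irr_sorted_eq _ (fun x y : 'I_(b * a) => val x < val y)).
- by move=> x y z; apply: ltn_trans.
- by move=> x; rewrite /= ltnn.
- exact: sorted_enum_set.
- rewrite sorted_map.
  have Hs : subrel (fun x y : 'I_b => val x < val y) (relpre (pos g) (fun x y : 'I_(b * a) => val x < val y)).
    by move=> x y /= H; apply: pos_mono.
  exact: (sub_sorted Hs (sorted_enum_set _ (supp g))).
- move=> x; rewrite mem_enum; apply/imsetP/mapP => [[j Hj ->]|[j Hj ->]];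
  by exists j; rewrite // mem_enum in Hj *.
Qed.

Variable pi : seq nat.
Let C := subst_const B A.

Definition PC (I : {set 'I_(b * a)}) := order_iso (mask [seq i \in I | i <- enum 'I_(b * a)] C) pi.
Definition QB (J : {set 'I_b}) := order_iso (mask [seq i \in J | i <- enum 'I_b] B) pi.

Lemma PC_enc g : PC (enc g) = QB (supp g).
Proof.
rewrite /PC /QB !mask_ofE //; last by rewrite /C size_subst.
rewrite enum_enc -map_comp.
apply: order_iso_map => x y _ _ /=.
rewrite !nth_subst ?rr_lt ?ltn_ord //.
case: (eqVneq x y) => [->|Hxy]; first by rewrite !ltnn.
have Hne : nth 0 B x != nth 0 B y.
  by rewrite nth_uniq ?ltn_ord //; apply: contra Hxy => /eqP E; apply/eqP/val_inj.
have Hx := HAlt _ (rr_lt g x). have Hy := HAlt _ (rr_lt g y).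
case: (ltngtP (nth 0 B x) (nth 0 B y)) => H.
- have := offC_lt A B _ _ (ltn_ord x) H. lia.
- have := offC_lt A B _ _ (ltn_ord y) H. lia.
- by rewrite H eqxx in Hne.
Qed.


Lemma card_fiber (J : {set 'I_b}) : #|[set g | supp g == J]| = a ^ #|J|.
Proof.
have HR : #|[pred o : option 'I_a | o != None]| = a.
  by have := cardC1 (None : option 'I_a); rewrite card_option card_ord.
rewrite -[X in X ^ _]HR -(card_pffun_on None). apply: eq_card => g; rewrite inE.
apply/eqP/pffun_onP => [E|[Hsup Himg]].
  split.
    by apply/subsetP => j; rewrite inE => H; rewrite -E inE.
  by move=> o /imageP [j Hj ->]; rewrite -E inE in Hj.
apply/setP => j; rewrite inE; apply/idP/idP => H.
  by apply: (subsetP Hsup); rewrite inE.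
by have := Himg (g j) (image_f g H).
Qed.

Lemma card_fibers (R : pred {set 'I_b}) k : (forall J, R J -> #|J| = k) ->
  #|[set g | R (supp g)]| = #|[set J | R J]| * a ^ k.
Proof.
move=> HK.
rewrite -sum1dep_card (partition_big (fun g => supp g) R) //.
transitivity (\sum_(J | R J) a ^ k).
  apply: eq_bigr => J HJ. rewrite sum1dep_card -(HK J HJ) -card_fiber.
  apply: eq_card => g; rewrite !inE. apply/andP/idP => [[_ //]|H]; split => //.
  by rewrite (eqP H).
rewrite -sum1dep_card big_distrl /=. by apply: eq_bigr => J _; rewrite mul1n.
Qed.

Lemma QB_size J : QB J -> #|J| = size pi.
Proof. by move/order_iso_size; rewrite size_mask_of. Qed.

Lemma PC_size I : PC I -> #|I| = size pi.
Proof. by move/order_iso_size; rewrite size_mask_of // /C size_subst. Qed.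

Lemma occ_decomp : exists E, occ pi C = occ pi B * a ^ size pi + E /\
  E + 'C(b, size pi) * a ^ size pi <= 'C(b * a, size pi).
Proof.
rewrite (occE pi C (b * a)); last by rewrite /C size_subst.
have -> : occn (b * a) pi C = #|[set I | PC I]| by [].
set S := [set I | PC I].
set Es := [set enc g | g : {ffun 'I_b -> option 'I_a}].
exists #|S :\: Es|. split.
  rewrite -(cardsID Es S). congr (_ + _).
  have -> : S :&: Es = enc @: [set g | PC (enc g)].
    apply/setP => I; rewrite !inE; apply/andP/imsetP.
      by move=> [HI /imsetP [g _ E]]; exists g; rewrite // inE -E.
    move=> [g Hg ->]; split; first by rewrite inE in Hg.
    exact: imset_f.
  rewrite card_imset; last exact: enc_inj.
  have -> : #|[set g | PC (enc g)]| = #|[set g | QB (supp g)]|.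
    by apply: eq_card => g; rewrite !inE PC_enc.
  by rewrite (card_fibers QB (size pi)) //; exact: QB_size.
set Dk := [set I : {set 'I_(b * a)} | #|I| == size pi].
have HSD : S \subset Dk by apply/subsetP => I; rewrite !inE => /PC_size ->.
have H1 : #|S :\: Es| <= #|Dk :\: Es| by apply: subset_leq_card; apply: setSD.
have H2 : #|Dk :&: Es| = 'C(b, size pi) * a ^ size pi.
  have -> : Dk :&: Es = enc @: [set g | #|supp g| == size pi].
    apply/setP => I; rewrite !inE; apply/andP/imsetP.
      by move=> [HI /imsetP [g _ E]]; exists g; rewrite // inE -card_enc -E.
    move=> [g Hg ->]; split; first by rewrite inE card_enc in Hg *.
    exact: imset_f.
  rewrite card_imset; last exact: enc_inj.
  rewrite (card_fibers (fun J => #|J| == size pi) (size pi)); last by move=> J /eqP.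
  by rewrite card_draws card_ord.
have H3 : #|Dk :&: Es| + #|Dk :\: Es| = 'C(b * a, size pi).
  by rewrite cardsID /Dk card_draws card_ord.
lia.
Qed.

End Occ.

Lemma ffact_ratio_aux a b k j : j <= k ->
  (b * a) ^_ j * (b - k) ^ j <= a ^ j * b ^_ j * b ^ j.
Proof.
elim: j => [|j IH] Hj; first by rewrite !ffactn0 !expn0.
rewrite !ffactnSr !expnS.
have H1 := IH (ltnW Hj).
have H2 : (b * a - j) * (b - k) <= a * (b - j) * b.
  have : (b * a - j) * (b - k) <= (b * a) * (b - j).
    apply: leq_mul; [exact: leq_subr| lia].
  move=> H; apply: leq_trans H _; apply: eq_leq; nia.
apply: (leq_trans _ (leq_trans (leq_mul H1 H2) _)); apply: eq_leq; nia.
Qed.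

Lemma binom_ratio a b k :
  'C(b * a, k) * (b - k) ^ k <= a ^ k * 'C(b, k) * b ^ k.
Proof.
have Hk : 0 < k`! := fact_gt0 k.
rewrite -(leq_pmul2r Hk).
have := ffact_ratio_aux a b k k (leqnn k).
rewrite -!bin_ffact => H.
apply: (leq_trans _ (leq_trans H _)); apply: eq_leq; nia.
Qed.

Section Reals.
Local Open Scope R_scope.

Lemma INR_mul m n : INR (m * n)%N = INR m * INR n.
Proof. by rewrite -multE mult_INR. Qed.

Lemma INR_add m n : INR (m + n)%N = INR m + INR n.
Proof. by rewrite -plusE plus_INR. Qed.

Lemma INR_exp m n : INR (m ^ n)%N = INR m ^ n.
Proof. elim: n => [|n IH]; first by rewrite expn0. by rewrite expnS INR_mul IH. Qed.

Lemma INR_leq m n : (m <= n)%N -> INR m <= INR n.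
Proof. by move/leP; apply: le_INR. Qed.

Lemma INR_pos n : (0 < n)%N -> 0 < INR n.
Proof. by move/ltP; apply: lt_0_INR. Qed.

Lemma INR_sub m n : (n <= m)%N -> INR (m - n)%N = INR m - INR n.
Proof. by move/leP => H; rewrite -minusE minus_INR. Qed.

Lemma bernoulli (x : R) n : 0 <= x <= 1 -> 1 - INR n * x <= (1 - x) ^ n.
Proof.
move=> Hx. elim: n => [|n IH]; first by rewrite /=; lra.
rewrite S_INR /=.
have H0 : 0 <= (1 - x) ^ n by apply: pow_le; lra.
have : (1 - INR n * x) * (1 - x) <= (1 - x) ^ n * (1 - x).
  by apply: Rmult_le_compat_r; lra.
have Hn : 0 <= INR n by apply: pos_INR.
nra.
Qed.

End Reals.

Section R7.
Local Open Scope R_scope.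

Lemma div_bounds (x d : R) : 0 < d -> 0 <= x /\ (x <= d -> x / d <= 1) /\ 0 <= x / d \/ x < 0.
Proof. move=> Hd. case: (Rle_lt_dec 0 x) => Hx; [left|right] => //.
split => //; split.
  move=> H; apply: (Rmult_le_reg_r d) => //. rewrite /Rdiv Rmult_assoc Rinv_l; lra.
by apply: Rmult_le_pos => //; apply: Rlt_le; apply: Rinv_0_lt_compat.
Qed.

Lemma occ_real1 X E c1 c2 p : 0 < c1 -> 0 < c2 -> 0 <= X <= c1 -> 0 <= E ->
  0 <= p -> E + c1 * p <= c2 ->
  Rabs ((X * p + E) / c2 - X / c1) <= 1 - c1 * p / c2.
Proof.
move=> H1 H2 HX HE Hp HEc.
set r := X / c1. set rho := c1 * p / c2. set e := E / c2.
have Hr : 0 <= r <= 1.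
  rewrite /r; split.
    by apply: Rmult_le_pos; [lra| apply: Rlt_le; apply: Rinv_0_lt_compat].
  apply: (Rmult_le_reg_r c1) => //. rewrite /Rdiv Rmult_assoc Rinv_l; lra.
have He : 0 <= e by apply: Rmult_le_pos; [lra| apply: Rlt_le; apply: Rinv_0_lt_compat].
have Hrho : 0 <= rho.
  by apply: Rmult_le_pos; [nra| apply: Rlt_le; apply: Rinv_0_lt_compat].
have Hsum : e + rho <= 1.
  have -> : e + rho = (E + c1 * p) / c2 by rewrite /e /rho; field; lra.
  apply: (Rmult_le_reg_r c2) => //. rewrite /Rdiv Rmult_assoc Rinv_l; lra.
have -> : (X * p + E) / c2 - X / c1 = r * rho + e - r.
  by rewrite /r /rho /e; field; lra.
apply: Rabs_le. nra.
Qed.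

Lemma occ_real2 (c1 c2 p y kk : R) (k : nat) : kk = INR k -> 0 < y -> 0 <= kk <= y ->
  0 < c2 -> c2 * (y - kk) ^ k <= p * c1 * y ^ k ->
  1 - c1 * p / c2 <= kk * kk / y.
Proof.
move=> Ek Hy Hk Hc2 H.
have Hyk : 0 < y ^ k by apply: pow_lt.
have E1 : (1 - kk / y) ^ k * y ^ k = (y - kk) ^ k.
  by rewrite -Rpow_mult_distr; congr pow; field; lra.
have Hb : (1 - kk / y) ^ k <= c1 * p / c2.
  apply: (Rmult_le_reg_r (c2 * y ^ k)); first by apply: Rmult_lt_0_compat.
  have -> : c1 * p / c2 * (c2 * y ^ k) = p * c1 * y ^ k by field; lra.
  rewrite -Rmult_assoc (Rmult_comm _ c2) Rmult_assoc E1. lra.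
have Hx : 0 <= kk / y <= 1.
  split; first by apply: Rmult_le_pos; [lra| apply: Rlt_le; apply: Rinv_0_lt_compat].
  apply: (Rmult_le_reg_r y) => //. rewrite /Rdiv Rmult_assoc Rinv_l; lra.
have := bernoulli _ k Hx. rewrite -Ek.
have -> : kk * (kk / y) = kk * kk / y by field; lra.
lra.
Qed.

Lemma cocc_real (cC cA x y kk : R) : 0 < x -> 1 <= y -> 0 <= kk ->
  y * cA <= cC <= y * (cA + kk) ->
  Rabs (cC / (y * x) - cA / x) <= (kk + 1) / x.
Proof.
move=> Hx Hy Hk [H1 H2].
set u := cC / y - cA.
have Hu : 0 <= u <= kk.
  have E : cC / y * y = cC by field; lra.
  rewrite /u; split; nra.
have -> : cC / (y * x) - cA / x = u / x by rewrite /u; field; lra.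
have -> : (kk + 1) / x = (kk + 1) * / x by [].
rewrite Rabs_mult Rabs_right; last by apply: Rle_ge; lra.
rewrite Rabs_right; last by apply: Rle_ge; apply: Rlt_le; apply: Rinv_0_lt_compat.
apply: Rmult_le_compat_r; [apply: Rlt_le; apply: Rinv_0_lt_compat| ]; lra.
Qed.

Lemma cocc_real0 (x y : R) : 0 < x -> 1 <= y ->
  Rabs ((y * x + 1) / (y * x) - (x + 1) / x) <= 1 / x.
Proof.
move=> Hx Hy.
have -> : (y * x + 1) / (y * x) - (x + 1) / x = (/ y - 1) * / x by field; lra.
have Hiy : 0 < / y <= 1.
  split; first by apply: Rinv_0_lt_compat; lra.
  rewrite -Rinv_1; apply: Rinv_le_contravar; lra.
rewrite Rabs_mult (Rabs_left1 (/ y - 1)); last by lra.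
rewrite Rabs_right; last by apply: Rle_ge; apply: Rlt_le; apply: Rinv_0_lt_compat.
rewrite /Rdiv Rmult_1_l. rewrite -[X in _ <= X]Rmult_1_l.
apply: Rmult_le_compat_r; [apply: Rlt_le; apply: Rinv_0_lt_compat| ]; lra.
Qed.

Lemma cv_close (u w : nat -> R) (sz : nat -> nat) (v K : R) :
  Un_cv u v -> (forall M, exists N, forall m, (N <= m)%coq_nat -> (M <= sz m)%N) ->
  0 <= K ->
  (exists N0, forall m, (N0 <= m)%coq_nat -> Rabs (w m - u m) <= K / INR (sz m)) ->
  Un_cv w v.
Proof.
move=> Hu Hsz HK [N0 HN0] eps Heps.
have Heps2 : 0 < eps / 2 by lra.
have [N1 HN1] := Hu _ Heps2.
have [M HM] := INR_archimed (eps / 2) K Heps2.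
have [N2 HN2] := Hsz (M.+1).
exists (N0 + N1 + N2)%coq_nat => m Hm.
have H0 := HN0 m ltac:(lia).
have H1 := HN1 m ltac:(lia).
have H2 := HN2 m ltac:(lia).
rewrite /R_dist in H1 *.
have Hpos : 0 < INR (sz m) by apply: INR_pos; lia.
have HMs : INR M.+1 <= INR (sz m) by apply: INR_leq.
have HM1 : INR M.+1 = INR M + 1 by rewrite S_INR.
have HK2 : K / INR (sz m) <= eps / 2.
  apply: (Rmult_le_reg_r (INR (sz m))) => //.
  rewrite /Rdiv Rmult_assoc Rinv_l; last lra. have := pos_INR M. nra.
have := Rabs_triang (w m - u m) (u m - v).
have -> : w m - u m + (u m - v) = w m - v by ring.
lra.
Qed.

End R7.

Arguments INR_pos {n}.
Arguments INR_leq {m n}.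
Arguments perm_nth_lt {s r}.
Arguments perm_uniq' {s}.

Section R8.
Local Open Scope R_scope.

Lemma cocc_bound A B pi : is_perm B -> (0 < size A)%N -> (0 < size B)%N -> (size pi <= size A)%N ->
  Rabs (cocc_t pi (subst_const B A) - cocc_t pi A) <= (INR (size pi) + 1) / INR (size A).
Proof.
move=> HB Ha Hb Hk.
rewrite /cocc_t size_subst.
rewrite ifF; last by apply/negbTE; rewrite -leqNgt; apply: leq_trans Hk _; rewrite leq_pmull.
rewrite ifF; last by apply/negbTE; rewrite -leqNgt.
have Hx := INR_pos Ha. have Hy : (1 <= INR (size B))%R by apply: (INR_leq Hb).
case: (posnP (size pi)) => Hk0.
  have -> : pi = [::] by apply: size0nil.
  rewrite !cocc_nil size_subst !S_INR INR_mul /=.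
  rewrite ?Rplus_0_l.
  exact: cocc_real0.
have /andP[H1 H2] := cocc_subst A B pi (perm_uniq' HB) Hk0.
rewrite INR_mul. apply: cocc_real => //; first exact: pos_INR.
split.
  by have := INR_leq H1; rewrite INR_mul.
by have := INR_leq H2; rewrite !INR_mul INR_add.
Qed.

Lemma occ_bound A B pi : is_perm A -> is_perm B -> (0 < size A)%N -> (0 < size B)%N -> (size pi <= size B)%N ->
  Rabs (occ_t pi (subst_const B A) - occ_t pi B) <= INR (size pi) * INR (size pi) / INR (size B).
Proof.
move=> HA HB Ha Hb Hk.
rewrite /occ_t size_subst.
rewrite ifF; last by apply/negbTE; rewrite -leqNgt; apply: leq_trans Hk _; rewrite leq_pmulr.
rewrite ifF; last by apply/negbTE; rewrite -leqNgt.
have HAlt : forall r, (r < size A)%N -> (nth 0 A r < size A)%N by move=> r Hr; exact: perm_nth_lt.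
have [E [HE1 HE2]] := occ_decomp A B Ha HAlt (perm_uniq' HB) pi.
rewrite HE1.
set X := occ pi B. set k := size pi. set c1 := 'C(size B, k). set c2 := 'C(size B * size A, k).
set p := (size A ^ k)%N.
have HX : (X <= c1)%N := occ_le pi B.
have Hc1 : (0 < c1)%N by rewrite bin_gt0.
have Hc2 : (0 < c2)%N by rewrite bin_gt0; apply: leq_trans Hk _; rewrite leq_pmulr.
have Hr := binom_ratio (size A) (size B) k.
apply: (Rle_trans _ (1 - INR c1 * INR p / INR c2)).
  rewrite INR_add INR_mul. apply: occ_real1.
  - exact: INR_pos.
  - exact: INR_pos.
  - split; [exact: pos_INR| exact: INR_leq].
  - exact: pos_INR.
  - exact: pos_INR.
  - by have := INR_leq HE2; rewrite INR_add INR_mul.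
apply: (occ_real2 _ _ _ _ _ k) => //.
- exact: INR_pos.
- split; [exact: pos_INR| exact: INR_leq].
- exact: INR_pos.
- have := INR_leq Hr. by rewrite !INR_mul !INR_exp INR_sub.
Qed.

End R8.

Lemma construction (PA PB : seq (seq nat)) (vA vB : seq nat -> R) (sA sB : nat -> seq nat) :
  perm_seq sA -> size_to_infty sA -> cocc_cv PA sA vA ->
  perm_seq sB -> size_to_infty sB -> occ_cv PB sB vB ->
  let sC := fun m => subst_const (sB m) (sA m) in
  size_to_infty sC /\ cocc_cv PA sC vA /\ occ_cv PB sC vB.
Proof.
move=> HpA HsA HcA HpB HsB HoB sC.
split; [|split].
- move=> M. have [N1 H1] := HsA 1. have [N2 H2] := HsB M.
  exists (N1 + N2)%coq_nat => m Hm. rewrite /sC size_subst.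
  have := H1 m ltac:(lia). have := H2 m ltac:(lia). move=> Hb Ha.
  apply: leq_trans Hb _. by rewrite leq_pmulr.
- move=> pi Hpi.
  apply: (cv_close (fun m => cocc_t pi (sA m)) _ (fun m => size (sA m)) _
            (Rplus (INR (size pi)) 1)).
  + exact: HcA.
  + exact: HsA.
  + have := pos_INR (size pi). lra.
  + have [N1 H1] := HsA (size pi).+1. have [N2 H2] := HsB 1.
    exists (N1 + N2)%coq_nat => m Hm.
    have := H1 m ltac:(lia). have := H2 m ltac:(lia). move=> Hb Ha.
    apply: cocc_bound; [exact: HpB| lia| lia| exact: ltnW Ha].
- move=> pi Hpi.
  apply: (cv_close (fun m => occ_t pi (sB m)) _ (fun m => size (sB m)) _
            (Rmult (INR (size pi)) (INR (size pi)))).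
  + exact: HoB.
  + exact: HsB.
  + have := pos_INR (size pi). nra.
  + have [N1 H1] := HsA 1. have [N2 H2] := HsB (size pi).+1.
    exists (N1 + N2)%coq_nat => m Hm.
    have := H1 m ltac:(lia). have := H2 m ltac:(lia). move=> Hb Ha.
    apply: occ_bound; [exact: HpA| exact: HpB| lia| lia| exact: ltnW Hb].
Qed.

Theorem mainTheorem14 (PA PB : seq (seq nat)) :
  all is_perm PA -> all is_perm PB ->
  (* A x B = C *)
  (forall vA vB : seq nat -> R, (limsetA PA vA /\ limsetB PB vB) <-> limsetC PA PB vA vB) /\
  (* the explicit construction *)
  (forall (vA vB : seq nat -> R) (sA sB : nat -> seq nat),
     limsetA PA vA -> limsetB PB vB ->
     perm_seq sA -> size_to_infty sA -> cocc_cv PA sA vA ->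
     perm_seq sB -> size_to_infty sB -> occ_cv PB sB vB ->
     let sC := fun m => subst_const (sB m) (sA m) in
     size_to_infty sC /\ cocc_cv PA sC vA /\ occ_cv PB sC vB).
Proof.
move=> _ _. split.
  move=> vA vB; split.
    move=> [[HuA [sA [HpA [HsA HcA]]]] [HuB [sB [HpB [HsB HoB]]]]].
    have [H1 [H2 H3]] := construction PA PB vA vB sA sB HpA HsA HcA HpB HsB HoB.
    split => //; split => //.
    exists (fun m => subst_const (sB m) (sA m)); split => //.
    by move=> m; apply: subst_perm.
  move=> [HuA [HuB [s [Hp [Hs [Hc Ho]]]]]].
  by split; split => //; exists s.
move=> vA vB sA sB _ _. exact: (construction PA PB vA vB sA sB).
Qed.
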